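(* Let $\mathcal{E}$ be an elliptic curve over $\mathbb{F}_q$ given by a smooth Weierstrass cubic $E(x,y,z)=0$ in $\mathbb{P}^2$, let $n'\ge1$, $l\ge1$, and let $R_1,\dots,R_{3n'+l}$ be distinct points of $\mathcal{E}(\mathbb{F}_q)$ with $(3n'+l)\times D$ evaluation matrix $\mathcal{M}$ and left kernel $\mathcal{K}$. (i) If there is a homogeneous polynomial $F$ of degree $n'$, not divisible by $E$, whose zero set contains $3n'$ of the points $R_1,\dots,R_{3n'+l}$, then $\mathcal{K}$ contains a nonzero vector $v$ having at least $l$ zero entries (namely zero in the positions of the remaining $l$ points). (ii) Conversely, if $\mathcal{K}$ contains a nonzero vector $v$ with at least $l$ zero entries, then for any set $S$ of $3n'$ indices containing all indices $r$ with $v_r\neq0$, there is a homogeneous polynomial of degree $n'$, not divisible by $E$, vanishing at all points $R_r$, $r\in S$.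
   Context: Notation: fix $n'\ge1$, let $D=\binom{n'+2}{2}$, and fix an ordering of the $D$ monomials $x^iy^jz^k$ with $i+j+k=n'$. For a point $R=(x_0:y_0:z_0)\in\mathbb{P}^2(\mathbb{F}_q)$ with a fixed choice of homogeneous coordinates, let $\overline{R}\in\mathbb{F}_q^D$ be the row vector of values $x_0^iy_0^jz_0^k$ in this ordering. The evaluation matrix of points $R_1,\dots,R_N$ is the $N\times D$ matrix $\mathcal{M}$ whose $r$-th row is $\overline{R_r}$; its left kernel is $\mathcal{K}=\{v\in\mathbb{F}_q^N: v\mathcal{M}=0\}$. *)

(* Defs.v *)
From HB Require Import structures.
From mathcomp Require Import all_boot all_order all_algebra all_field.
Set Implicit Arguments. Unset Strict Implicit. Unset Printing Implicit Defensive.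
Import Order.TTheory GRing.Theory Num.Theory.
Local Open Scope ring_scope.

(* Polynomials in three variables x, y, z over K, represented as nested
   univariate polynomials: the outer variable is z, the middle one y,
   the inner one x.  The coefficient of x^i y^j z^k in p is ((p`_k)`_j)`_i. *)
Definition mpoly (K : fieldType) := {poly {poly {poly K}}}.

Definition varX (K : fieldType) : mpoly K := (('X : {poly K})%:P)%:P.
Definition varY (K : fieldType) : mpoly K := ('X : {poly {poly K}})%:P.
Definition varZ (K : fieldType) : mpoly K := 'X.
Definition cst (K : fieldType) (c : K) : mpoly K := ((c%:P)%:P)%:P.

Definition eval3 (K : fieldType) (p : mpoly K) (x y z : K) : K :=
  ((p.[(z%:P)%:P]).[y%:P]).[x].

(* p is homogeneous of degree n (the zero polynomial counts as homogeneous) *)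
Definition homogeneous (K : fieldType) (n : nat) (p : mpoly K) : Prop :=
  forall i j k : nat, ((p`_k)`_j)`_i != 0 -> (i + j + k)%N = n.

Definition mdivides (K : fieldType) (e f : mpoly K) : Prop :=
  exists g : mpoly K, f = e * g.

Definition weierstrass (K : fieldType) (a1 a2 a3 a4 a6 : K) : mpoly K :=
  let X := varX K in let Y := varY K in let Z := varZ K in
  Y ^+ 2 * Z + cst a1 * X * Y * Z + cst a3 * Y * Z ^+ 2
  - X ^+ 3 - cst a2 * X ^+ 2 * Z - cst a4 * X * Z ^+ 2 - cst a6 * Z ^+ 3.

(* Discriminant of the Weierstrass equation; smooth iff it is nonzero. *)
Definition wdisc (K : fieldType) (a1 a2 a3 a4 a6 : K) : K :=
  let b2 := a1 ^+ 2 + 4%:R * a2 in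
  let b4 := 2%:R * a4 + a1 * a3 in
  let b6 := a3 ^+ 2 + 4%:R * a6 in
  let b8 := a1 ^+ 2 * a6 + 4%:R * a2 * a6 - a1 * a3 * a4 + a2 * a3 ^+ 2 - a4 ^+ 2 in
  - b2 ^+ 2 * b8 - 8%:R * b4 ^+ 3 - 27%:R * b6 ^+ 2 + 9%:R * b2 * b4 * b6.

(* projective points given by homogeneous coordinates *)
Definition pt (K : Type) := (K * K * K)%type.
Definition px (K : Type) (P : pt K) := P.1.1.
Definition py (K : Type) (P : pt K) := P.1.2.
Definition pz (K : Type) (P : pt K) := P.2.

Definition pt_nonzero (K : fieldType) (P : pt K) : Prop :=
  ~ [/\ px P = 0, py P = 0 & pz P = 0].

Definition proj_eq (K : fieldType) (P Q : pt K) : Prop :=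
  exists c : K, [/\ c != 0, px Q = c * px P, py Q = c * py P & pz Q = c * pz P].

(* Fixed ordering of the D = 'C(n+2,2) monomials x^i y^j z^k, i+j+k = n:
   lexicographic in (i, j). *)
Definition monos (n : nat) : seq (nat * nat * nat) :=
  flatten [seq [seq (i, j, (n - i - j)%N) | j <- iota 0 (n - i).+1] | i <- iota 0 n.+1].

Definition Dim (n : nat) : nat := 'C(n.+2, 2).

Definition evrow (K : fieldType) (n : nat) (P : pt K) : 'rV[K]_(Dim n) :=
  \row_(m < Dim n)
    let e := nth (0%N, 0%N, 0%N) (monos n) m in
    px P ^+ e.1.1 * py P ^+ e.1.2 * pz P ^+ e.2.

Definition evmx (K : fieldType) (n N : nat) (R : 'I_N -> pt K) : 'M[K]_(N, Dim n) :=
  \matrix_(r < N, m < Dim n) evrow n (R r) ord0 m.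

Definition in_left_kernel (K : fieldType) (N D : nat) (M : 'M[K]_(N, D)) (v : 'rV[K]_N) : Prop :=
  v *m M = 0.

(* Main.v *)
Require Import Defs.
From HB Require Import structures.
From mathcomp Require Import all_boot all_order all_algebra all_field.
From mathcomp Require Import zify ring.
Import Order.TTheory GRing.Theory Num.Theory.
Local Open Scope ring_scope.
Set Implicit Arguments. Unset Strict Implicit.

Lemma size_monos n : size (monos n) = Dim n.
Proof.
rewrite /monos /Dim.
rewrite size_allpairs_dep.
elim: n => [//|n IH].
have -> : iota 0 n.+2 = 0 :: map (addn 1) (iota 0 n.+1) by rewrite -iotaDl.
have sc : forall a s, sumn (a :: s) = (a + sumn s)%N by [].
rewrite map_cons -map_comp sc.
rewrite (eq_map (g := fun i => size (iota 0 (n - i).+1))); last first.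
  by move=> i /=; rewrite !size_iota; congr S; lia.
rewrite IH size_iota [in RHS]binS bin1; lia.
Qed.

Lemma mem_monos n e : (e \in monos n) = (e.1.1 + e.1.2 + e.2 == n)%N.
Proof.
rewrite /monos; apply/idP/idP.
  move=> /(allpairsPdep (T:=fun _ => nat) (f := fun i j => (i, j, (n - i - j)%N)) (s := iota 0 n.+1) (t := fun i => iota 0 (n - i).+1)) [i [j [hi hj ->]]] /=; move: hi hj; rewrite !mem_iota; lia.
case: e => [[i j] k] /= /eqP h; apply/(allpairsPdep (T:=fun _ => nat) (f := fun i j => (i, j, (n - i - j)%N)) (s := iota 0 n.+1) (t := fun i => iota 0 (n - i).+1)); exists i, j; rewrite !mem_iota; split; try lia.
congr (_,_,_); lia.
Qed.

Section Poly.
Variable K : fieldType.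
Implicit Types p q : mpoly K.

Definition mono (i j k : nat) : mpoly K := varX K ^+ i * varY K ^+ j * varZ K ^+ k.

Lemma monoE i j k : mono i j k = (('X^i : {poly K})%:P * 'X^j)%:P * 'X^k.
Proof. by rewrite /mono /varX /varY /varZ rmorphM /= !rmorphXn. Qed.

Lemma coef_mono i j k a b c :
  (((mono i j k)`_c)`_b)`_a = ((a == i) && (b == j) && (c == k))%:R.
Proof.
rewrite monoE coefMXn.
case: ltnP => hc.
  rewrite !coef0 (_ : (c == k) = false) ?andbF //; apply/eqP; lia.
rewrite coefC; case: eqP => hck.
  rewrite (_ : c == k) ?andbT; last by apply/eqP; lia.
  rewrite coefMXn; case: ltnP => hb.
    rewrite !coef0 (_ : (b == j) = false) ?andbF //; apply/eqP; lia.
  rewrite coefC; case: eqP => hbj.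
    rewrite (_ : b == j) ?andbT; last by apply/eqP; lia.
    by rewrite coefXn.
  rewrite coef0 (_ : (b == j) = false) ?andbF //; apply/eqP; lia.
rewrite !coef0 (_ : (c == k) = false) ?andbF //; apply/eqP; lia.
Qed.

Lemma coef_cstM (c : K) p i j k : (((cst c * p)`_k)`_j)`_i = c * ((p`_k)`_j)`_i.
Proof. by rewrite /cst !coefCM. Qed.

Lemma cstD (a b : K) : cst (a + b) = cst a + cst b.
Proof. by rewrite /cst !rmorphD. Qed.
Lemma cstM (a b : K) : cst (a * b) = cst a * cst b.
Proof. by rewrite /cst !rmorphM. Qed.
Lemma cst0 : cst (0:K) = 0.
Proof. by rewrite /cst !rmorph0. Qed.
Lemma cst1 : cst (1:K) = 1.
Proof. by rewrite /cst !rmorph1. Qed.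

Lemma eval3D p q (x y z : K) : eval3 (p + q) x y z = eval3 p x y z + eval3 q x y z.
Proof. by rewrite /eval3 !hornerD. Qed.
Lemma eval3B p q (x y z : K) : eval3 (p - q) x y z = eval3 p x y z - eval3 q x y z.
Proof. by rewrite /eval3 !hornerD !hornerN. Qed.
Lemma eval3M p q (x y z : K) : eval3 (p * q) x y z = eval3 p x y z * eval3 q x y z.
Proof. by rewrite /eval3 !hornerM. Qed.
Lemma eval3_cst (c x y z : K) : eval3 (cst c) x y z = c.
Proof. by rewrite /eval3 /cst !hornerC. Qed.
Lemma eval3_sum I (r : seq I) (P : pred I) (F : I -> mpoly K) (x y z : K) :
  eval3 (\sum_(i <- r | P i) F i) x y z = \sum_(i <- r | P i) eval3 (F i) x y z.
Proof.
elim/big_rec2: _ => [|i a b _ h]; first by rewrite /eval3 !horner0.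
by rewrite eval3D h.
Qed.
Lemma eval3_mono i j k (x y z : K) : eval3 (mono i j k) x y z = x ^+ i * y ^+ j * z ^+ k.
Proof.
rewrite /mono !eval3M.
have ev : forall p n, eval3 (p ^+ n) x y z = eval3 p x y z ^+ n.
  by move=> p; elim=> [|n IH]; rewrite ?expr0 ?exprS ?eval3M ?IH // /eval3 !hornerC.
by rewrite !ev /eval3 /varX /varY /varZ !(hornerC, hornerX).
Qed.
End Poly.

Lemma decomp (K : fieldType) (p : mpoly K) :
  p = \sum_(k < size p) \sum_(j < size p`_k) \sum_(i < size (p`_k)`_j)
        cst (((p`_k)`_j)`_i) * mono K i j k.
Proof.
rewrite -[p in LHS]coefK poly_def; apply: eq_bigr => k _.
rewrite -[p`_k in LHS]coefK poly_def -mul_polyC rmorph_sum big_distrl /=.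
apply: eq_bigr => j _.
rewrite -[p`_k`_j in LHS]coefK poly_def -mul_polyC rmorph_sum big_distrl /=.
rewrite rmorph_sum big_distrl /=.
apply: eq_bigr => i _.
by rewrite monoE /cst -!mul_polyC !rmorphM /= !mulrA.
Qed.

Definition redi (n t : nat) : nat * nat * nat :=
  if (t <= n)%N then (0%N, t, (n - t)%N)
  else if (t <= n.*2)%N then (1%N, (t - n.+1)%N, (n - 1 - (t - n.+1))%N)
  else (2%N, (t - n.*2.+1)%N, (n - 2 - (t - n.*2.+1))%N).

Lemma redi_sum n t : (t < 3 * n)%N ->
  [/\ ((redi n t).1.1 + (redi n t).1.2 + (redi n t).2 = n)%N & ((redi n t).1.1 <= 2)%N].
Proof.
rewrite /redi => h; case: (leqP t n) => h1 /=; [|case: (leqP t n.*2) => h2 /=]; split; lia.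
Qed.

Lemma redi_inj n t t' : (t < 3 * n)%N -> (t' < 3 * n)%N -> redi n t = redi n t' -> t = t'.
Proof.
move=> h h' e.
pose inv (e : nat * nat * nat) := if e.1.1 == 0%N then e.1.2
  else if e.1.1 == 1%N then (n.+1 + e.1.2)%N else (n.*2.+1 + e.1.2)%N.
have iK : forall u, (u < 3 * n)%N -> inv (redi n u) = u.
  move=> u hu; rewrite /inv /redi; case: (leqP u n) => h1 //=.
  case: (leqP u n.*2) => h2 /=; lia.
by rewrite -(iK t h) -(iK t' h') e.
Qed.

Lemma redi_surj n i j k : (1 <= n)%N -> (i <= 2)%N -> (i + j + k = n)%N ->
  exists2 t, (t < 3 * n)%N & redi n t = (i, j, k).
Proof.
move=> hn hi hs; rewrite /redi.
have : (i = 0 \/ i = 1 \/ i = 2)%N by lia.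
case=> [hi0|[hi0|hi0]]; subst i.
- exists j; first lia. rewrite ifT; last lia. congr (_,_,_); lia.
- exists (n.+1 + j)%N; first lia. rewrite ifF; last lia. rewrite ifT; last lia.
  congr (_,_,_); lia.
- exists (n.*2.+1 + j)%N; first lia. rewrite ifF; last lia. rewrite ifF; last lia.
  congr (_,_,_); lia.
Qed.


Section Red.
Variables (K : fieldType) (a1 a2 a3 a4 a6 : K) (n : nat).
Hypothesis hn : (1 <= n)%N.
Let E := weierstrass a1 a2 a3 a4 a6.

Definition red (t : 'I_(3 * n)) : mpoly K :=
  mono K (redi n t).1.1 (redi n t).1.2 (redi n t).2.

Definition Rd (p : mpoly K) :=
  exists G (c : 'I_(3 * n) -> K), p = E * G + \sum_t cst (c t) * red t.

Lemma Rd0 : Rd 0.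
Proof. exists 0, (fun _ => 0); rewrite mulr0 add0r big1 // => t _; by rewrite cst0 mul0r. Qed.

Lemma RdD p q : Rd p -> Rd q -> Rd (p + q).
Proof.
case=> [G [c ->]] [G' [c' ->]]; exists (G + G'), (fun t => c t + c' t).
rewrite mulrDr. under [X in _ = _ + X]eq_bigr do rewrite cstD mulrDl.
rewrite big_split /=. by rewrite addrACA.
Qed.

Lemma RdcM a p : Rd p -> Rd (cst a * p).
Proof.
case=> [G [c ->]]; exists (cst a * G), (fun t => a * c t).
rewrite mulrDr mulr_sumr; congr (_ + _); first by rewrite !mulrA [cst a * E]mulrC.
by apply: eq_bigr => t _; rewrite cstM mulrA.
Qed.


Lemma RdE q : Rd (E * q).
Proof. exists q, (fun _ => 0); rewrite big1 ?addr0 // => t _; by rewrite cst0 mul0r. Qed.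

Lemma mono_red i j k : (i + j + k = n)%N -> (i <= 2)%N -> Rd (mono K i j k).
Proof.
move=> hs hi; have [t ht et] := redi_surj hn hi hs.
pose t0 := Ordinal ht.
exists 0, (fun u => if u == t0 then 1 else 0).
rewrite mulr0 add0r.
Time rewrite (eq_bigr (fun u => if u == t0 then red u else 0)); last first.
  by move=> u _; case: eqP => _; [rewrite cst1 mul1r | rewrite cst0 mul0r].
Time rewrite -big_mkcond big_pred1_eq.
by rewrite /red (_ : nat_of_ord t0 = t) // et.
Qed.

Lemma cstN (a : K) : cst (- a) = - cst a.
Proof. by rewrite /cst !rmorphN. Qed.

Lemma mono_shift i j k :
  mono K (i + 3) j k = mono K i (j + 2) (k + 1) + cst a1 * mono K (i + 1) (j + 1) (k + 1)
    + cst a3 * mono K i (j + 1) (k + 2) + cst (- a2) * mono K (i + 2) j (k + 1)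
    + cst (- a4) * mono K (i + 1) j (k + 2) + cst (- a6) * mono K i j (k + 3)
    + E * (cst (-1) * mono K i j k).
Proof.
rewrite /E /weierstrass /mono !exprD !cstN cst1.
move: (varX K) (varY K) (varZ K) (cst a1) (cst a2) (cst a3) (cst a4) (cst a6) => X Y Z c1 c2 c3 c4 c6.
ring.
Qed.

Lemma Rd_mono_aux b i j k : (i <= b)%N -> (i + j + k = n)%N -> Rd (mono K i j k).
Proof.
elim: b i j k => [|b IH] i j k hib hs; first by apply: mono_red => //; lia.
case: (leqP i 2) => hi2; first exact: mono_red.
have -> : i = ((i - 3) + 3)%N by lia.
rewrite mono_shift.
have hI : forall u v w, (u <= (i - 3) + 2)%N -> (u + v + w = n)%N -> Rd (mono K u v w).
  by move=> u v w hu huv; apply: IH => //; lia.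
repeat apply: RdD; try apply: RdcM; try apply: RdE; apply: hI; lia.
Qed.

Lemma Rd_mono i j k : (i + j + k = n)%N -> Rd (mono K i j k).
Proof. exact: (@Rd_mono_aux i). Qed.

Lemma Rd_hom p : homogeneous n p -> Rd p.
Proof.
move=> hp; rewrite (decomp p).
apply: (big_ind Rd Rd0 RdD) => k _; apply: (big_ind Rd Rd0 RdD) => j _.
apply: (big_ind Rd Rd0 RdD) => i _.
have [h0|hnz] := eqVneq (((p`_k)`_j)`_i) 0.
  by rewrite h0 cst0 mul0r; exact: Rd0.
by apply: RdcM; apply: Rd_mono; apply: hp.
Qed.

Definition bnd d (p : mpoly K) := forall k j, leq (size ((p`_k)`_j)) d.

Lemma bndD d p q : bnd d p -> bnd d q -> bnd d (p + q).
Proof.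
move=> hp hq k j; rewrite !coefD; apply: leq_trans (size_polyD _ _) _.
by rewrite geq_max hp hq.
Qed.

Lemma bndN d p : bnd d p -> bnd d (- p).
Proof. by move=> hp k j; rewrite !coefN size_polyN. Qed.

Lemma bnd_le d d' p : (d <= d')%N -> bnd d p -> bnd d' p.
Proof. by move=> h hp k j; apply: leq_trans (hp k j) h. Qed.

Lemma bnd_cstM d c p : bnd d p -> bnd d (cst c * p).
Proof.
move=> hp k j; rewrite /cst !coefCM; apply: leq_trans (size_mul_leq _ _) _.
have := hp k j; have := size_polyC_leq1 c; lia.
Qed.

Lemma bnd_monoM d i j k p : bnd d p -> bnd (d + i) (mono K i j k * p).
Proof.
move=> hp c b.
rewrite monoE -mulrA coefCM coefXnM.
case: ltnP => _; first by rewrite mulr0 coef0 size_poly0.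
rewrite -mulrA coefCM coefXnM; case: ltnP => _; first by rewrite mulr0 size_poly0.
apply: leq_trans (size_mul_leq _ _) _; rewrite size_polyXn.
have := hp (c - k)%N (b - j)%N; lia.
Qed.

Lemma bnd_mono d i j k : (i < d)%N -> bnd d (mono K i j k).
Proof.
move=> hi c b; apply/leq_sizeP => a ha; rewrite coef_mono.
by rewrite (_ : (a == i) = false) //; apply/eqP; lia.
Qed.

Lemma bnd_sum d I (r : seq I) (P : pred I) (F : I -> mpoly K) :
  (forall i, P i -> bnd d (F i)) -> bnd d (\sum_(i <- r | P i) F i).
Proof.
move=> h; apply: (big_ind (bnd d)) => //; last exact: bndD.
by move=> k j; rewrite !coef0 size_poly0.
Qed.

Lemma bnd0_eq0 p : bnd 0 p -> p = 0.
Proof.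
move=> hp; apply/polyP => k; rewrite coef0; apply/polyP => j; rewrite coef0.
by apply/eqP; rewrite -size_poly_eq0 -leqn0 hp.
Qed.

Lemma bnd_exists p : exists d, bnd d p.
Proof.
pose sz := fun k j => size ((p`_k)`_j).
pose sk := fun k => size (p`_k).
exists (\max_(k < size p) \max_(j < sk k) sz k j)%N => k j.
case: (ltnP k (size p)) => hk; last by rewrite (nth_default 0 hk) coef0 size_poly0.
case: (ltnP j (size p`_k)) => hj; last by rewrite (nth_default 0 hj) size_poly0.
apply: leq_trans (leq_bigmax (Ordinal hk)) => /=.
exact: (leq_bigmax (Ordinal hj)).
Qed.

Lemma E_split G :
  mono K 3 0 0 * G = (mono K 0 2 1 + cst a1 * mono K 1 1 1 + cst a3 * mono K 0 1 2
    + cst (- a2) * mono K 2 0 1 + cst (- a4) * mono K 1 0 2 + cst (- a6) * mono K 0 0 3) * G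
    - E * G.
Proof.
rewrite /E /weierstrass /mono !cstN.
move: (varX K) (varY K) (varZ K) (cst a1) (cst a2) (cst a3) (cst a4) (cst a6) => X Y Z c1 c2 c3 c4 c6.
ring.
Qed.

Lemma E_nodiv G : bnd 3 (E * G) -> G = 0.
Proof.
move=> h3; have [d hd] := bnd_exists G.
apply: bnd0_eq0; elim: d hd => [//|d IH] hd; apply: IH.
have hX : bnd (d + 3) (mono K 3 0 0 * G).
  rewrite E_split; apply: bndD; last by apply: bndN; apply: bnd_le h3; lia.
  have t1 : forall i j k, (i <= 2)%N -> bnd (d + 3) (mono K i j k * G).
    by move=> i j k hi; apply: (bnd_le (d := (d.+1 + i)%N)); [lia | exact: bnd_monoM].
  have t2 : forall c i j k, (i <= 2)%N -> bnd (d + 3) (cst c * mono K i j k * G).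
    by move=> c i j k hi; rewrite -mulrA; apply: bnd_cstM; exact: t1.
  rewrite !mulrDl.
  do 5 (apply: bndD; last exact: t2).
  exact: t1.
move=> k j; have := hX k j.
rewrite monoE -mulrA coefCM coefXnM ltn0 subn0 -mulrA coefCM coefXnM ltn0 subn0.
have [->|nz] := eqVneq ((G`_k)`_j) 0; first by rewrite size_poly0.
rewrite mulrC size_mulXn //; lia.
Qed.
End Red.


Section Fc.
Variables (K : fieldType) (a1 a2 a3 a4 a6 : K) (n : nat).
Hypothesis hn : (1 <= n)%N.

Definition Fc (c : 'I_(3 * n) -> K) : mpoly K := \sum_t cst (c t) * red K t.

Lemma coef_Fc c i j k :
  (((Fc c)`_k)`_j)`_i = \sum_t c t * (redi n t == (i, j, k))%:R.
Proof.
rewrite /Fc !coef_sum; apply: eq_bigr => t _.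
rewrite coef_cstM /red coef_mono; congr (_ * _%:R).
case: (redi n t) => [[u v] w] /=.
by rewrite !xpair_eqE [i == u]eq_sym [j == v]eq_sym [k == w]eq_sym.
Qed.

Lemma Fc_hom c : homogeneous n (Fc c).
Proof.
move=> i j k; rewrite coef_Fc => h.
case: (pickP (fun t : 'I_(3 * n) => redi n t == (i, j, k))) => [t /eqP ht | hnone].
  by have [hs _] := redi_sum (ltn_ord t); move: hs; rewrite ht.
by move: h; rewrite big1 ?eqxx // => t _; rewrite hnone mulr0.
Qed.

Lemma Fc_neq0 c t0 : c t0 != 0 -> Fc c != 0.
Proof.
move=> h; apply: contra h => /eqP e.
have := coef_Fc c (redi n t0).1.1 (redi n t0).1.2 (redi n t0).2.
rewrite e !coef0 => /esym.
rewrite (bigD1 t0) //= -surjective_pairing -surjective_pairing eqxx mulr1 big1 ?addr0.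
  by move=> ->.
move=> u hu.
case: eqP => [/(redi_inj (ltn_ord u) (ltn_ord t0)) /val_inj eut|]; last by rewrite mulr0.
by rewrite eut eqxx in hu.
Qed.

Lemma Fc_nodiv c t0 : c t0 != 0 -> ~ mdivides (weierstrass a1 a2 a3 a4 a6) (Fc c).
Proof.
move=> h [G eG].
have hb : bnd 3 (Fc c).
  apply: bnd_sum => t _; apply: (@bnd_cstM K n hn); rewrite /red; apply: (@bnd_mono K n hn).
  by have [_ ?] := redi_sum (ltn_ord t).
rewrite eG in hb; have G0 := E_nodiv hn hb.
by move: (Fc_neq0 h); rewrite eG G0 mulr0 eqxx.
Qed.

Lemma eval3_Fc c x y z :
  eval3 (Fc c) x y z = \sum_t c t * (x ^+ (redi n t).1.1 * y ^+ (redi n t).1.2 * z ^+ (redi n t).2).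
Proof.
rewrite /Fc eval3_sum; apply: eq_bigr => t _.
by rewrite eval3M eval3_cst /red eval3_mono.
Qed.
End Fc.


Lemma left_ker_exists (F : fieldType) m k (A : 'M[F]_(m, k)) (x : 'cV_k) :
  (k <= m)%N -> x != 0 -> A *m x = 0 -> exists2 w : 'rV_m, w != 0 & w *m A = 0.
Proof.
move=> hkm hx hAx.
have nf : ~~ row_free A^T.
  apply: contra hx => hf; have := mulmx_free_eq0 x^T hf.
  rewrite -trmx_mul hAx trmx0 eqxx => /esym/eqP e.
  by rewrite -[x]trmxK e trmx0.
have hr : (\rank A < m)%N.
  move: nf; rewrite /row_free mxrank_tr => nf.
  have := rank_leq_col A; rewrite leq_eqVlt (negbTE nf) /= => h; lia.
have hk : kermx A != 0.
  apply/negP => /eqP e; have := mxrank_ker A; rewrite e mxrank0; lia.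
case: (pickP (fun i => row i (kermx A) != 0)) => [i hi | h0].
  exists (row i (kermx A)) => //.
  by rewrite -row_mul mulmx_ker row0.
move: hk; rewrite (_ : kermx A = 0) ?eqxx //.
apply/row_matrixP => i; rewrite row0; apply/eqP.
by have := h0 i; move/negbFE.
Qed.

Definition mval (K : fieldType) (n : nat) (t : 'I_(3 * n)) (P : pt K) : K :=
  px P ^+ (redi n t).1.1 * py P ^+ (redi n t).1.2 * pz P ^+ (redi n t).2.

Lemma ev_red (K : fieldType) (a1 a2 a3 a4 a6 : K) n (hn : (1 <= n)%N) (m : 'I_(Dim n)) :
  exists rho : 'I_(3 * n) -> K, forall P : pt K,
    eval3 (weierstrass a1 a2 a3 a4 a6) (px P) (py P) (pz P) = 0 ->
    evrow n P ord0 m = \sum_t rho t * mval t P.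
Proof.
set e := nth (0%N, 0%N, 0%N) (monos n) m.
have : e \in monos n by rewrite mem_nth // size_monos.
rewrite mem_monos => /eqP hs.
have [G [rho eq]] := Rd_mono a1 a2 a3 a4 a6 hn hs.
exists rho => P hP.
rewrite mxE /= -/e -eval3_mono eq eval3D eval3M hP mul0r add0r -/(Fc rho) eval3_Fc.
by [].
Qed.

Unset Implicit Arguments. Set Strict Implicit.

Theorem mainTheorem4 (K : finFieldType) (a1 a2 a3 a4 a6 : K) (n l : nat)
  (R : 'I_(3 * n + l) -> pt K) :
  wdisc a1 a2 a3 a4 a6 != 0 ->
  (1 <= n)%N -> (1 <= l)%N ->
  (forall r, pt_nonzero (R r)) ->
  (forall r, eval3 (weierstrass a1 a2 a3 a4 a6) (px (R r)) (py (R r)) (pz (R r)) = 0) ->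
  (forall r s, r != s -> ~ proj_eq (R r) (R s)) ->
  (* (i) *)
  (forall (F : mpoly K) (T : {set 'I_(3 * n + l)}),
      homogeneous n F ->
      ~ mdivides (weierstrass a1 a2 a3 a4 a6) F ->
      #|T| = (3 * n)%N ->
      (forall r, r \in T -> eval3 F (px (R r)) (py (R r)) (pz (R r)) = 0) ->
      exists v : 'rV[K]_(3 * n + l),
        [/\ v != 0, in_left_kernel (evmx n R) v,
            (l <= #|[set r | v ord0 r == 0%R]|)%N
          & forall r, r \notin T -> v ord0 r = 0%R])
  /\
  (* (ii) *)
  (forall v : 'rV[K]_(3 * n + l),
      v != 0 -> in_left_kernel (evmx n R) v ->
      (l <= #|[set r | v ord0 r == 0%R]|)%N ->
      forall S : {set 'I_(3 * n + l)},
        #|S| = (3 * n)%N ->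
        (forall r, v ord0 r != 0%R -> r \in S) ->
        exists F : mpoly K,
          [/\ homogeneous n F, ~ mdivides (weierstrass a1 a2 a3 a4 a6) F
            & forall r, r \in S -> eval3 F (px (R r)) (py (R r)) (pz (R r)) = 0]).
Proof.
move=> hdisc hn hl hnz hE hdist; split.
- move=> F T hF hnd hT hFT.
  have [G [c eF]] := Rd_hom a1 a2 a3 a4 a6 hn hF.
  have [t0 ht0] : exists t0, c t0 != 0.
    case: (pickP (fun t => c t != 0)) => [t ht | h0]; first by exists t.
    exfalso; apply: hnd; exists G; rewrite eF big1 ?addr0 // => t _.
    by move/negbFE/eqP: (h0 t) => ->; rewrite cst0 mul0r.
  pose B : 'M[K]_(#|T|, 3 * n) := \matrix_(s, t) mval t (R (enum_val s)).
  pose cv : 'cV[K]_(3 * n) := \col_t c t.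
  have hBc : B *m cv = 0.
    apply/matrixP => s j; rewrite !mxE.
    have := hFT _ (enum_valP s); rewrite eF eval3D eval3M hE mul0r add0r.
    rewrite -/(Fc c) eval3_Fc => h0; rewrite -[RHS]h0.
    by apply: eq_bigr => t _; rewrite /B /cv !mxE mulrC.
  have hcv : cv != 0.
    apply: contra ht0 => /eqP e; apply/eqP.
    by have := congr1 (fun M : 'cV_(3 * n) => M t0 ord0) e; rewrite !mxE.
  have hTle : (3 * n <= #|T|)%N by rewrite hT.
  have [w hw hwB] := left_ker_exists hTle hcv hBc.
  pose v : 'rV[K]_(3 * n + l) := \row_r \sum_s w ord0 s * (enum_val s == r)%:R.
  have vE : forall r, v ord0 r = \sum_s w ord0 s * (enum_val s == r)%:R.
    by move=> r; rewrite mxE.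
  have vsupp : forall r, r \notin T -> v ord0 r = 0.
    move=> r hr; rewrite vE big1 // => s _; rewrite (_ : (enum_val s == r) = false).
      by rewrite mulr0.
    by apply: contraNF hr => /eqP <-; exact: enum_valP.
  have vval : forall s, v ord0 (enum_val s) = w ord0 s.
    move=> s; rewrite vE (bigD1 s) // [enum_val s == enum_val s]eqxx mulr1 big1.
      by rewrite /= addr0.
    move=> s' hs'; rewrite (_ : (enum_val s' == enum_val s) = false); first by rewrite mulr0.
    by apply/negbTE; apply: contra hs' => /eqP/enum_val_inj ->.
  exists v; split.
  + have [s0 hs0] : exists s0, w ord0 s0 != 0.
      case: (pickP (fun s => w ord0 s != 0)) => [s hs | h0]; first by exists s.
      exfalso; move/eqP: hw; apply; apply/rowP => s; rewrite mxE.
      by move/negbFE/eqP: (h0 s).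
    apply/eqP => e; move: hs0; rewrite -vval e mxE eqxx //.
  + rewrite /in_left_kernel; apply/rowP => m; rewrite !mxE.
    have [rho hrho] := ev_red a1 a2 a3 a4 a6 hn m.
    rewrite (eq_bigr (fun r => v ord0 r * \sum_t rho t * mval t (R r))); last first.
      by move=> r _; rewrite -(hrho _ (hE r)) [evmx _ _ _ _]mxE.
    rewrite (bigID (fun r => r \in T)) /= [X in _ + X]big1 ?addr0; last first.
      by move=> r hr; rewrite vsupp ?mul0r.
    rewrite big_enum_val /=.
    rewrite (eq_bigr (fun s => \sum_t rho t * (w ord0 s * B s t))); last first.
      move=> s _; rewrite vval mulr_sumr; apply: eq_bigr => t _.
      by rewrite /B mxE mulrCA.
    rewrite exchange_big /= big1 // => t _.
    rewrite -mulr_sumr (_ : \sum_s w ord0 s * B s t = (w *m B) ord0 t); last by rewrite mxE.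
    by rewrite hwB mxE mulr0.
  + apply: leq_trans (_ : #|~: T| <= _)%N.
      by have := cardsC T; rewrite card_ord hT; lia.
    apply: subset_leq_card; apply/subsetP => r; rewrite in_setC inE => hr.
    by rewrite vsupp.
  + exact: vsupp.
- move=> v hv hker hcnt S hS hsupp.
  pose B : 'M[K]_(#|S|, 3 * n) := \matrix_(s, t) mval t (R (enum_val s)).
  pose w : 'rV[K]_#|S| := \row_s v ord0 (enum_val s).
  have hw : w != 0.
    have [r0 hr0] : exists r0, v ord0 r0 != 0.
      case: (pickP (fun r => v ord0 r != 0)) => [r hr | h0]; first by exists r.
      exfalso; move/eqP: hv; apply; apply/rowP => r; rewrite mxE.
      by move/negbFE/eqP: (h0 r).
    have hS0 := hsupp _ hr0.
    apply/eqP => e; move: hr0; rewrite -(enum_rankK_in hS0 hS0).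
    by have := congr1 (fun M : 'rV_#|S| => M ord0 (enum_rank_in hS0 r0)) e; rewrite !mxE => ->; rewrite eqxx.
  have hwB : w *m B = 0.
    apply/rowP => t; rewrite !mxE.
    pose e := redi n t.
    have he : e \in monos n by rewrite mem_monos; have [-> _] := redi_sum (ltn_ord t).
    have hi : (index e (monos n) < Dim n)%N by rewrite -size_monos index_mem.
    pose mi := Ordinal hi.
    have := congr1 (fun M : 'rV_(Dim n) => M ord0 mi) hker; rewrite !mxE => h0.
    rewrite -[RHS]h0 [RHS](bigID (fun r => r \in S)) [X in _ = _ + X]big1; last first.
      move=> r hr; rewrite (_ : v ord0 r = 0) ?mul0r //.
      by apply/eqP; apply: contraR hr => /hsupp.
    rewrite addr0 [RHS](eq_bigl (fun r => r \in S)) // [RHS]big_enum_val; apply: eq_bigr => s _.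
    rewrite /w /B !mxE /mi /= nth_index //.
  have hSle : (#|S| <= 3 * n)%N by rewrite hS.
  have hwT : w^T != 0 by apply: contra hw => /eqP e; rewrite -[w]trmxK e trmx0.
  have hBw : B^T *m w^T = 0 by rewrite -trmx_mul hwB trmx0.
  have [c hc hcB] := left_ker_exists hSle hwT hBw.
  have [t0 ht0] : exists t0, c ord0 t0 != 0.
    case: (pickP (fun t => c ord0 t != 0)) => [t ht | h0]; first by exists t.
    exfalso; move/eqP: hc; apply; apply/rowP => t; rewrite mxE.
    by move/negbFE/eqP: (h0 t).
  exists (Fc (fun t => c ord0 t)); split.
  + exact: Fc_hom.
  + exact: (Fc_nodiv hn ht0).
  + move=> r hr; rewrite eval3_Fc.
    have := congr1 (fun M : 'rV_#|S| => M ord0 (enum_rank_in hr r)) hcB; rewrite !mxE => h0; rewrite -[RHS]h0.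
    apply: eq_bigr => t _; rewrite /B !mxE (enum_rankK_in hr hr).
    by [].
Qed.
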